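(* Let $\mathcal A$ be a full adjunction implicative ordered combinatory algebra with underlying complete lattice $(A,\le)$, and let $\mathcal K_{\mathcal A\bullet}$ be the associated abstract Krivine structure ($\Lambda=\Pi=A$, $s\perp\pi\iff s\le\pi$, $\mathrm{push}(s,\pi)=s\to\pi$). Write $A_\Pi$, $A_\Lambda$ for $A$ viewed as $\Pi$, resp. $\Lambda$, ${\uparrow}a=\{x:a\le x\}$, ${\downarrow}a=\{x:x\le a\}$, and let $\bot,\top$ be the least and greatest elements of $A$. Then: (1) for $C\subseteq A_\Pi$, ${}^\perp C={\downarrow}(\inf C)$; for $C\subseteq A_\Lambda$, $C^\perp={\uparrow}(\sup C)$; (2) for $a\in A_\Pi$: ${}^\perp({\uparrow}a)={\downarrow}a$, ${}^\perp({\downarrow}a)=\{\bot\}$, ${}^\perp\{a\}={\downarrow}a$, $({}^\perp\{a\})^\perp={\uparrow}a$, $\overline{{\uparrow}a}={\uparrow}a$, $\widehat{{\uparrow}a}={\uparrow}a$; for $a\in A_\Lambda$: $({\downarrow}a)^\perp={\uparrow}a$, $({\uparrow}a)^\perp=\{\top\}$, $\{a\}^\perp={\uparrow}a$, ${}^\perp(\{a\}^\perp)={\downarrow}a$, and the closure of ${\downarrow}a$ on the term side, ${}^\perp(({\downarrow}a)^\perp)$, equals ${\downarrow}a$; (3) for $D\subseteq A_\Pi$: $\overline D={\uparrow}(\inf D)$ and $\widehat D=\bigcup_{c\in D}{\uparrow}c$; hence $\mathcal P_\perp(A_\Pi)$ is the set of principal filters of $A$, $\mathcal P_\bullet(A_\Pi)$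 is the set of unions of principal filters of $A$, and $\inf D=\inf\widehat D=\inf\overline D$; (4) for $C,D\subseteq A_\Pi$: $(\inf C\to\inf D)\le\inf(C\to_\perp D)=\inf(C\to_\bullet D)=\inf(C\to D)$.
   Context: A full adjunction implicative ordered combinatory algebra is an inf-complete poset $(A,\le)$ with application $ab$ monotone in both arguments, implication $a\to b$ antimonotone in the first and monotone in the second argument, elements $\mathsf k,\mathsf s$ with $\mathsf k ab\le a$, $\mathsf s abc\le ac(bc)$, such that $a\le b\to c\iff ab\le c$, and a subset $\Phi\subseteq A$ closed under application containing $\mathsf s,\mathsf k$. Polars: $L^\perp=\{\pi:\forall t\in L,\ t\perp\pi\}$, ${}^\perp P=\{t:\forall\pi\in P,\ t\perp\pi\}$; $\overline P=({}^\perp P)^\perp$; $\widehat P=\bigcup_{\pi\in P}\overline{\{\pi\}}$; $\mathcal P_\perp(\Pi)=\{P:\overline P=P\}$, $\mathcal P_\bullet(\Pi)=\{P:\widehat P=P\}$. For $C,D\subseteq\Pi$: $C\to D=\{t\cdot\pi:t\in{}^\perp C,\pi\in D\}$, $C\to_\bullet D=\widehat{C\to D}$, $C\to_\perp D=\overline{C\to D}$, where $t\cdot\pi=t\to\pi$. *)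

(* Defs.v *)
Definition set (T : Type) := T -> Prop.
Definition set_eq {T} (P Q : set T) : Prop := forall x, P x <-> Q x.

Record FAIOCA := {
  car :> Type;
  le : car -> car -> Prop;
  le_refl : forall a, le a a;
  le_trans : forall a b c, le a b -> le b c -> le a c;
  le_antisym : forall a b, le a b -> le b a -> a = b;
  inf : set car -> car;
  inf_lb : forall (P : set car) x, P x -> le (inf P) x;
  inf_glb : forall (P : set car) y, (forall x, P x -> le y x) -> le y (inf P);
  app : car -> car -> car;
  app_mono : forall a a' b b', le a a' -> le b b' -> le (app a b) (app a' b');
  imp : car -> car -> car;
  imp_mono : forall a a' b b', le a' a -> le b b' -> le (imp a b) (imp a' b');
  kk : car;
  ss : car;
  kk_ax : forall a b, le (app (app kk a) b) a;
  ss_ax : forall a b c, le (app (app (app ss a) b) c) (app (app a c) (app b c));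
  adjunction : forall a b c, le a (imp b c) <-> le (app a b) c;
  Phi : set car;
  Phi_app : forall a b, Phi a -> Phi b -> Phi (app a b);
  Phi_kk : Phi kk;
  Phi_ss : Phi ss
}.

Arguments le {f} _ _.
Arguments inf {f} _.
Arguments imp {f} _ _.
Arguments app {f} _ _.

Section Krivine.
Variable A : FAIOCA.

Definition sup (P : set A) : A := inf (fun y => forall x, P x -> le x y).
Definition bot : A := inf (fun _ => True).
Definition top : A := inf (fun _ => False).
Definition up (a : A) : set A := fun x => le a x.
Definition down (a : A) : set A := fun x => le x a.
Definition single (a : A) : set A := fun x => x = a.

(* Abstract Krivine structure K_{A bullet}: Lambda = Pi = A,
   s ⊥ π iff s <= π, push(s, π) = s -> π. *)
Definition perp (s pi : A) : Prop := le s pi.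
Definition push (s pi : A) : A := imp s pi.

Definition polR (L : set A) : set A := fun pi => forall t, L t -> perp t pi.
Definition polL (P : set A) : set A := fun t => forall pi, P pi -> perp t pi.
Definition cl (P : set A) : set A := polR (polL P).
Definition hat (P : set A) : set A := fun x => exists pi, P pi /\ cl (single pi) x.
Definition arr (C D : set A) : set A :=
  fun x => exists t pi, polL C t /\ D pi /\ x = push t pi.
Definition arr_bullet (C D : set A) : set A := hat (arr C D).
Definition arr_perp (C D : set A) : set A := cl (arr C D).

End Krivine.

Arguments sup {A} _.
Arguments up {A} _.
Arguments down {A} _.
Arguments single {A} _.
Arguments polR {A} _.
Arguments polL {A} _.
Arguments cl {A} _.
Arguments hat {A} _.
Arguments perp {A} _ _.
Arguments push {A} _ _.
Arguments arr {A} _ _.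
Arguments arr_bullet {A} _ _.
Arguments arr_perp {A} _ _.

(* Main.v *)
Require Import Defs.
From Stdlib Require Import Setoid.

Section S.
Variable A : FAIOCA.

Lemma inf_ext (P Q : set A) : set_eq P Q -> inf P = inf Q.
Proof.
  intros H; apply le_antisym; apply inf_glb; intros x Hx; apply inf_lb; apply H; auto.
Qed.

Lemma L1 (C : set A) : set_eq (polL C) (down (inf C)).
Proof.
  intros x; split; unfold polL, down, perp.
  - intros H; apply inf_glb; auto.
  - intros H pi Hp; eapply le_trans; [exact H| apply inf_lb; auto].
Qed.

Lemma sup_ub (C : set A) x : C x -> le x (sup C).
Proof. intros Hx; apply inf_glb; intros y Hy; auto. Qed.

Lemma L2 (C : set A) : set_eq (polR C) (up (sup C)).
Proof.
  intros x; split; unfold polR, up, perp.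
  - intros H; apply inf_lb; auto.
  - intros H t Ht; eapply le_trans; [apply sup_ub; exact Ht| exact H].
Qed.

Lemma inf_up (a : A) : inf (up a) = a.
Proof. apply le_antisym. apply inf_lb; apply le_refl. apply inf_glb; auto. Qed.

Lemma sup_down (a : A) : sup (down a) = a.
Proof. apply le_antisym. apply inf_lb; auto. apply sup_ub; apply le_refl. Qed.

Lemma bot_le (x : A) : le (bot A) x.
Proof. apply inf_lb; auto. Qed.

Lemma le_top (x : A) : le x (top A).
Proof. apply inf_glb; intros _ []. Qed.

Lemma up_ext (a b : A) : a = b -> set_eq (up a) (up b).
Proof. intros ->; intro; tauto. Qed.

Lemma seq_trans (P Q R : set A) : set_eq P Q -> set_eq Q R -> set_eq P R.
Proof. intros H1 H2 x; rewrite (H1 x); apply H2. Qed.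

Lemma polR_ext (P Q : set A) : set_eq P Q -> set_eq (polR P) (polR Q).
Proof. intros H x; unfold polR; split; intros H' t Ht; apply H'; apply H; auto. Qed.

Lemma cl_eq (D : set A) : set_eq (cl D) (up (inf D)).
Proof.
  unfold cl. eapply seq_trans. apply polR_ext, L1.
  eapply seq_trans. apply L2. apply up_ext. apply sup_down.
Qed.

Lemma hat_eq (D : set A) : set_eq (hat D) (fun x => exists c, D c /\ up c x).
Proof.
  intros x; unfold hat; split; intros [c [Hc Hx]]; exists c; split; auto.
  - apply cl_eq in Hx. unfold up in *. replace c with (inf (single c)) at 1; auto.
    apply le_antisym. apply inf_lb; reflexivity. apply inf_glb; intros y ->; apply le_refl.
  - apply cl_eq. unfold up in *. eapply le_trans; [apply inf_lb; reflexivity| exact Hx].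
Qed.

Lemma inf_hat (D : set A) : inf D = inf (hat D).
Proof.
  apply le_antisym; apply inf_glb; intros x Hx.
  - apply hat_eq in Hx. destruct Hx as [c [Hc Hx]].
    eapply le_trans; [apply inf_lb; exact Hc| exact Hx].
  - apply inf_lb. apply hat_eq. exists x; split; auto; apply le_refl.
Qed.

Lemma inf_cl (D : set A) : inf D = inf (cl D).
Proof. rewrite (inf_ext _ _ (cl_eq D)). symmetry; apply inf_up. Qed.

End S.

Theorem mainTheorem12 (A : FAIOCA) :
  (* (1) *)
  (forall C : set A, set_eq (polL C) (down (inf C))) /\
  (forall C : set A, set_eq (polR C) (up (sup C))) /\
  (* (2), Pi side *)
  (forall a : A,
     set_eq (polL (up a)) (down a) /\
     set_eq (polL (down a)) (single (bot A)) /\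
     set_eq (polL (single a)) (down a) /\
     set_eq (polR (polL (single a))) (up a) /\
     set_eq (cl (up a)) (up a) /\
     set_eq (hat (up a)) (up a)) /\
  (* (2), Lambda side *)
  (forall a : A,
     set_eq (polR (down a)) (up a) /\
     set_eq (polR (up a)) (single (top A)) /\
     set_eq (polR (single a)) (up a) /\
     set_eq (polL (polR (single a))) (down a) /\
     set_eq (polL (polR (down a))) (down a)) /\
  (* (3) *)
  (forall D : set A,
     set_eq (cl D) (up (inf D)) /\
     set_eq (hat D) (fun x => exists c, D c /\ up c x)) /\
  (forall P : set A, set_eq (cl P) P <-> exists a : A, set_eq P (up a)) /\
  (forall P : set A, set_eq (hat P) P <->
     exists S : set A, set_eq P (fun x => exists c, S c /\ up c x)) /\
  (forall D : set A, inf D = inf (hat D) /\ inf D = inf (cl D)) /\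
  (* (4) *)
  (forall C D : set A,
     le (imp (inf C) (inf D)) (inf (arr_perp C D)) /\
     inf (arr_perp C D) = inf (arr_bullet C D) /\
     inf (arr_bullet C D) = inf (arr C D)).
Proof.
  unfold set_eq, polL, polR, cl, hat, perp, up, down, single.
  assert (L1 := L1 A); assert (L2 := L2 A); assert (cl_eq := cl_eq A);
  assert (hat_eq := hat_eq A); assert (ih := inf_hat A); assert (ic := inf_cl A);
  assert (bl := bot_le A); assert (lt := le_top A);
  unfold set_eq, polL, polR, cl, hat, perp, up, down, single in *.
  split; [exact L1|]. split; [exact L2|].
  split; [|split; [|split; [|split; [|split; [|split]]]]].
  - intros a; repeat split.
    + intros H; apply H; apply le_refl.
    + intros H pi Hp; eapply le_trans; eauto.
    + intros H; apply le_antisym; auto; apply H; auto.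
    + intros ->; intros pi _; auto.
    + intros H; apply H; reflexivity.
    + intros H pi ->; auto.
    + intros H; apply H; intros pi Hp; subst; apply le_refl.
    + intros H t Ht; eapply le_trans; [apply Ht; reflexivity| exact H].
    + intros H; apply H; intros t Ht; exact Ht.
    + intros H t Ht; apply Ht; exact H.
    + intros [pi [Hp H]]; eapply le_trans; [exact Hp|]. apply H; intros t Ht; subst; apply le_refl.
    + intros H; exists x; split; auto. intros t Ht; apply Ht; reflexivity.
  - intros a; repeat split.
    + intros H; apply H; apply le_refl.
    + intros H t Ht; eapply le_trans; eauto.
    + intros H; apply le_antisym; auto; apply H; auto.
    + intros ->; intros t _; auto.
    + intros H; apply H; reflexivity.
    + intros H t ->; auto.
    + intros H; apply H; intros t Ht; subst; apply le_refl.
    + intros H t Ht; eapply le_trans; [exact H| apply Ht; reflexivity].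
    + intros H; apply H; intros t Ht; exact Ht.
    + intros H t Ht; apply Ht; exact H.
  - intros D; split; [apply cl_eq | apply hat_eq].
  - intros P; split.
    + intros H; exists (inf P); intros x; split; intro Hx.
      * apply inf_lb; exact Hx.
      * apply H, cl_eq; exact Hx.
    + intros [a Ha] x. split; intro Hx.
      * apply cl_eq in Hx. rewrite (inf_ext A P (fun x => le a x) Ha) in Hx.
        pose proof (inf_up A a) as E; unfold up in E; rewrite E in Hx. apply Ha; exact Hx.
      * apply cl_eq. apply inf_lb; exact Hx.
  - intros P; split.
    + intros H; exists P; intros x; split; intro Hx.
      * apply hat_eq, H; exact Hx.
      * apply H, hat_eq; exact Hx.
    + intros [S HS] x. rewrite (hat_eq P x). split.
      * intros [c [Hc Hx]]. apply HS in Hc. destruct Hc as [d [Hd Hdc]].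
        apply HS. exists d; split; auto; eapply le_trans; eauto.
      * intros Hx; exists x; split; auto; apply le_refl.
  - intros D; split; auto.
  - intros C D; split; [|split].
    + unfold arr_perp. rewrite <- (inf_cl A (arr C D)). apply inf_glb. intros x [t [pi [Ht [Hp ->]]]].
      unfold push. apply imp_mono. apply inf_glb; auto. apply inf_lb; auto.
    + unfold arr_perp, arr_bullet. rewrite <- (inf_cl A (arr C D)), <- (inf_hat A (arr C D)). reflexivity.
    + unfold arr_bullet. rewrite <- (inf_hat A (arr C D)); reflexivity.
Qed.
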